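(* Let $t\ge 3$, let $\mathcal{A}$ be a nontrivial clutter on $E_t=\{1,\ldots,t\}$, and let $\mathcal{B}:=\mathfrak{B}(\mathcal{A})$ be its blocker. Then $T_{\mathcal{B}^{\triangledown}}=-T_{\mathcal{A}^{\triangledown}}\cdot\overline{\mathbf{U}}(2^t)$, and: (i) $\mathfrak{q}(T_{\mathcal{B}^{\triangledown}})=\mathfrak{q}(T_{\mathcal{A}^{\triangledown}})$ and $\boldsymbol{x}(T_{\mathcal{B}^{\triangledown}})=\boldsymbol{x}(T_{\mathcal{A}^{\triangledown}})\cdot\overline{\mathbf{U}}(2^t)\cdot\overline{\mathbf{T}}(2^t)$; (ii) if the set $\{k\in\{1,\ldots,2^t\}: T_{\mathcal{A}^{\triangledown}}(k)=-1\}$ is the disjoint union of integer intervals $[i_1,j_1]\,\dot\cup\cdots\dot\cup\,[i_\varrho,j_\varrho]$ with $i_k\le j_k$ and $j_k+2\le i_{k+1}$ for $1\le k\le \varrho-1$, then $\mathfrak{q}(T_{\mathcal{B}^{\triangledown}})=\mathfrak{q}(T_{\mathcal{A}^{\triangledown}})=2\varrho-1$, $\boldsymbol{x}(T_{\mathcal{A}^{\triangledown}})=\sum_{k=1}^{\varrho-1}\boldsymbol{\sigma}(j_k+1)-\sum_{\ell=1}^{\varrho}\boldsymbol{\sigma}(i_\ell)$, and $\boldsymbol{x}(T_{\mathcal{B}^{\triangledown}})=\sum_{k=1}^{\varrho-1}\boldsymbol{\sigma}(2^t-j_k+1)-\sum_{\ell=1}^{\varrho}\boldsymbol{\sigma}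(2^t-i_\ell+2)$.
   Context: A clutter on $E_t$ is a family of subsets of $E_t$ none of which contains another; it is nontrivial if it is neither the empty family nor $\{\emptyset\}$. For a family $\mathcal{C}$, $\mathcal{C}^{\triangledown}:=\{D\subseteq E_t: D\supseteq C\text{ for some }C\in\mathcal{C}\}$. The blocker $\mathfrak{B}(\mathcal{A})$ is the family of inclusion-minimal sets meeting every member of $\mathcal{A}$. Order the $2^t$ subsets of $E_t$ by increasing cardinality, and lexicographically among subsets of equal cardinality. For a family $\mathcal{F}$ of subsets of $E_t$, $\boldsymbol{\gamma}(\mathcal{F})\in\{0,1\}^{2^t}$ has $k$-th entry $1$ iff the $k$-th subset in this order lies in $\mathcal{F}$, and the characteristic tope is $T_{\mathcal{F}}:=\mathrm{T}^{(+)}_{2^t}-2\boldsymbol{\gamma}(\mathcal{F})\in\{1,-1\}^{2^t}$, where $\mathrm{T}^{(+)}_{2^t}$ is the all-ones row vector. Let $\boldsymbol{\sigma}(e)$ be the $e$-th standard unit vector of $\mathbb{R}^{2^t}$. Define $R^0:=\mathrm{T}^{(+)}_{2^t}$ and, for $1\le s\le 2^t-1$, $R^s$ the vector with entries $-1$ in positions $1,\ldots,s$ and $1$ elsewhere (first half of a symmetric cycle $R^0,\ldots,R^{2\cdot2^t-1}$, $R^{2^t+k}=-R^k$, in the hypercube graph on $\{1,-1\}^{2^t}$). For $T\in\{1,-1\}^{2^t}$, $\boldsymbol{x}(T)$ is the unique vector (in $\{-1,0,1\}^{2^t}$) with $T=\sum_{i=1}^{2^t}x_iR^{i-1}$, and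 $\mathfrak{q}(T)$ is the number of its nonzero entries. $\overline{\mathbf{U}}(2^t)$ is the backward identity matrix ($(i,j)$ entry $\delta_{i+j,2^t+1}$) and $\overline{\mathbf{T}}(2^t)$ the forward shift matrix ($(i,j)$ entry $\delta_{j-i,1}$), both of order $2^t$. *)

(* Defs.v *)
From HB Require Import structures.
From mathcomp Require Import all_boot all_order all_algebra.
Set Implicit Arguments. Unset Strict Implicit. Unset Printing Implicit Defensive.
Import Order.TTheory GRing.Theory Num.Theory.
Local Open Scope ring_scope.

(* E_t is modelled by 'I_t (element m : 'I_t stands for m+1). *)

Definition clutter t (C : {set {set 'I_t}}) : Prop :=
  forall A B, A \in C -> B \in C -> A \subset B -> A = B.

Definition nontrivial_clutter t (C : {set {set 'I_t}}) : Prop :=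
  clutter C /\ C != set0 /\ C != [set set0].

Definition upclosure t (C : {set {set 'I_t}}) : {set {set 'I_t}} :=
  [set D : {set 'I_t} | [exists A in C, A \subset D]].

Definition blocker t (C : {set {set 'I_t}}) : {set {set 'I_t}} :=
  [set D : {set 'I_t} | minset (fun E : {set 'I_t} => [forall A in C, A :&: E != set0]) D].

Fixpoint lexlt (s1 s2 : seq nat) : bool :=
  match s1, s2 with
  | [::], [::] => false
  | [::], _ :: _ => true
  | _ :: _, [::] => false
  | a :: s, b :: s' => (a < b)%N || ((a == b) && lexlt s s')
  end.

Definition elems t (A : {set 'I_t}) : seq nat :=
  sort leq [seq val x | x <- enum A].

Definition subset_lt t (A B : {set 'I_t}) : bool :=
  (#|A| < #|B|)%N || ((#|A| == #|B|) && lexlt (elems A) (elems B)).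

Definition subset_le t (A B : {set 'I_t}) : bool := (A == B) || subset_lt A B.

Definition ordered_subsets t : seq {set 'I_t} :=
  sort (@subset_le t) (enum {set 'I_t}).

(* k-th subset (0-based k; the paper's k+1-th). *)
Definition kth_subset t (k : nat) : {set 'I_t} := nth set0 (ordered_subsets t) k.

(* gamma(F) and the characteristic tope T_F = 1 - 2 gamma(F), as rational
   row vectors of length 2^t (0-based index k = paper's position k+1). *)
Definition gammaF t (F : {set {set 'I_t}}) : 'rV[rat]_(2 ^ t) :=
  \row_(k < 2 ^ t) ((kth_subset t k \in F)%:R).

Definition topeF t (F : {set {set 'I_t}}) : 'rV[rat]_(2 ^ t) :=
  const_mx 1 - 2%:R *: gammaF F.

(* The vectors R^s, s = 0..n-1: entries -1 in (1-based) positions 1..s. *)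
Definition Rvec n (s : nat) : 'rV[rat]_n :=
  \row_(m < n) (if (m < s)%N then -1 else 1).

Definition Rmat n : 'M[rat]_n := \matrix_(i < n, m < n) Rvec n i 0 m.

(* x(T): the unique vector with T = sum_i x_i R^{i-1}, i.e. T = x *m Rmat. *)
Definition xvec n (T : 'rV[rat]_n) : 'rV[rat]_n := T *m invmx (Rmat n).

Definition qnum n (T : 'rV[rat]_n) : nat := #|[set i : 'I_n | xvec T 0 i != 0]|.

(* Backward identity and forward shift (1-based (i,j): i+j = n+1, j-i = 1). *)
Definition Ubar n : 'M[rat]_n := \matrix_(i < n, j < n) ((i + j == n.-1)%N)%:R.
Definition Tbar n : 'M[rat]_n := \matrix_(i < n, j < n) ((val j == i.+1)%N)%:R.

(* sigma(e): e-th (1-based) standard unit row vector. *)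
Definition sigma n (e : nat) : 'rV[rat]_n := \row_(m < n) ((m.+1 == e)%N)%:R.

(* Main.v *)
Require Import Defs.
From HB Require Import structures.
From mathcomp Require Import all_boot all_order all_algebra zify ring lra.
Import Order.TTheory GRing.Theory Num.Theory.
Set Implicit Arguments. Unset Strict Implicit. Unset Printing Implicit Defensive.

Lemma lexlt_irr s : lexlt s s = false.
Proof. by elim: s => //= a s ->; rewrite ltnn eqxx. Qed.

Lemma lexlt_trans s1 s2 s3 : lexlt s1 s2 -> lexlt s2 s3 -> lexlt s1 s3.
Proof.
elim: s1 s2 s3 => [|a s1 IH] [|b s2] [|c s3] //=.
case/orP=> [ab|/andP[/eqP-> h1]]; case/orP=> [bc|/andP[/eqP<- h2]].
- by rewrite (ltn_trans ab bc).
- by rewrite ab.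
- by rewrite bc.
- by rewrite eqxx (IH _ _ h1 h2) orbT.
Qed.

Lemma lexlt_total s1 s2 : s1 != s2 -> lexlt s1 s2 || lexlt s2 s1.
Proof.
elim: s1 s2 => [|a s1 IH] [|b s2] //=.
rewrite eqseq_cons; case: (ltngtP a b) => //= eab /=.
by subst b => /=; apply: IH.
Qed.

Lemma lexlt_asym s1 s2 : lexlt s1 s2 -> lexlt s2 s1 = false.
Proof. by move=> h; apply/negP => h'; have := lexlt_trans h h'; rewrite lexlt_irr. Qed.

Lemma lexlt_char (s1 s2 : seq nat) : sorted ltn s1 -> sorted ltn s2 -> size s1 = size s2 ->
  lexlt s1 s2 <-> exists m, [/\ m \in s1, m \notin s2 & forall x, x < m -> (x \in s1) = (x \in s2)].
Proof.
elim: s1 s2 => [|a s1 IH] [|b s2] //=.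
  by split=> // [[m []]].
move=> p1 p2 [sz].
have A1 := order_path_min ltn_trans p1; have A2 := order_path_min ltn_trans p2.
have S1 := path_sorted p1; have S2 := path_sorted p2.
have nin1 x : x <= a -> (x \in s1) = false.
  by move=> xa; apply/negP => /(allP A1) /=; rewrite ltnNge xa.
have nin2 x : x <= b -> (x \in s2) = false.
  by move=> xa; apply/negP => /(allP A2) /=; rewrite ltnNge xa.
split.
- case/orP => [ab|/andP[/eqP eab h]].
  + exists a; split; first by rewrite inE eqxx.
    * by rewrite inE negb_or nin2 ?(ltnW ab) // andbT neq_ltn ab.
    * move=> x xa; rewrite !inE nin1 ?(ltnW xa) // nin2; last by lia.
      by rewrite orbF orbF; apply/eqP/eqP; lia.
  + subst b; have [m [m1 m2 mx]] := (IH s2 S1 S2 sz).1 h.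
    have am : a < m by have := allP A1 _ m1.
    exists m; split; first by rewrite inE m1 orbT.
    * by rewrite inE negb_or m2 andbT neq_ltn am orbT.
    * by move=> x xm; rewrite !inE mx.
- move=> [m [m1 m2 mx]].
  case: (ltngtP a b) => [//|ba|eab] /=.
  + have bm: b < m.
      rewrite ltnNge; apply/negP => mb.
      move: m1; rewrite inE nin1; last by lia.
      by rewrite orbF => /eqP; lia.
    by have := mx b bm; rewrite !inE eqxx orTb nin1 ?orbF; [move/eqP; lia | lia].
  + subst b; rewrite ?ltnn ?eqxx /=; apply/(IH s2 S1 S2 sz).
    have ma : m != a by apply: contra m2 => /eqP ->; rewrite inE eqxx.
    exists m; split.
    * by move: m1; rewrite inE (negbTE ma).
    * by move: m2; rewrite inE negb_or => /andP[].
    * move=> x xm; have := mx x xm; rewrite !inE.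
      case: (eqVneq x a) => [->|_] //=; by rewrite nin1 // nin2.
Qed.

Section Sub.
Variable t : nat.
Implicit Types A B C : {set 'I_t}.

Lemma elems_sorted A : sorted ltn (elems A).
Proof.
rewrite ltn_sorted_uniq_leq sort_uniq sort_sorted ?andbT; last exact: leq_total.
by rewrite (map_inj_uniq val_inj) enum_uniq.
Qed.

Lemma mem_elems A x : (x \in elems A) = [exists m : 'I_t, (m \in A) && (val m == x)].
Proof.
rewrite mem_sort; apply/mapP/existsP => [[m]|[m /andP[mA /eqP <-]]].
  by rewrite mem_enum => mA ->; exists m; rewrite mA eqxx.
by exists m; rewrite ?mem_enum.
Qed.

Lemma mem_elems_ord A (m : 'I_t) : (val m \in elems A) = (m \in A).
Proof.
rewrite mem_elems; apply/existsP/idP => [[k /andP[kA /eqP/val_inj <-]]//|mA].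
by exists m; rewrite mA eqxx.
Qed.

Lemma elems_lt A x : x \in elems A -> x < t.
Proof. by rewrite mem_elems => /existsP[m /andP[_ /eqP <-]]; apply: ltn_ord. Qed.

Lemma size_elems A : size (elems A) = #|A|.
Proof. by rewrite size_sort size_map -cardE. Qed.

Lemma elems_inj A B : elems A = elems B -> A = B.
Proof. by move=> e; apply/setP => m; rewrite -!mem_elems_ord e. Qed.

Lemma lex_sets A B : #|A| = #|B| ->
  lexlt (elems A) (elems B) <->
  exists m : 'I_t, [/\ m \in A, m \notin B & forall x : 'I_t, x < m -> (x \in A) = (x \in B)].
Proof.
move=> cAB; rewrite lexlt_char ?elems_sorted ?size_elems //; split.
- move=> [m [m1 m2 mx]]; have mt := elems_lt m1.
  exists (Ordinal mt); rewrite -!mem_elems_ord /=; split => // x xm.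
  by rewrite -!mem_elems_ord mx.
- move=> [m [m1 m2 mx]]; exists (val m); rewrite !mem_elems_ord; split => // x xm.
  case: (ltnP x t) => xt.
    by rewrite -[x]/(val (Ordinal xt)) !mem_elems_ord mx.
  apply/idP/idP => /elems_lt; lia.
Qed.

Lemma compl_lt A B : subset_lt A B -> subset_lt (~: B) (~: A).
Proof.
have hC (X : {set 'I_t}) : #|~: X| = t - #|X| by rewrite [LHS]cardsCs setCK card_ord.
have mX (X : {set 'I_t}) : #|X| <= t by have := max_card X; rewrite card_ord.
rewrite /subset_lt; case/orP => [lt|/andP[/eqP e h]].
  by rewrite !hC; apply/orP; left; have := mX A; have := mX B; lia.
have e' : #|~: B| = #|~: A| by rewrite !hC e.
rewrite e' eqxx ltnn /=.
have [m [m1 m2 mx]] := (lex_sets e).1 h.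
apply/(lex_sets e'); exists m; rewrite !inE m1 m2; split => // x xm.
by rewrite !inE mx.
Qed.

Lemma subset_le_trans : transitive (@subset_le t).
Proof.
move=> B A C; rewrite /subset_le /subset_lt.
case/orP=> [/eqP->//|h1]; case/orP=> [/eqP<-|h2]; rewrite ?h1 ?orbT //.
apply/orP; right; move: h1 h2.
case/orP=> [l1|/andP[/eqP e1 x1]]; case/orP=> [l2|/andP[/eqP e2 x2]].
- by rewrite (ltn_trans l1 l2).
- by rewrite -e2 l1.
- by rewrite e1 l2.
- by rewrite e1 e2 eqxx (lexlt_trans x1 x2) orbT.
Qed.

Lemma subset_le_anti : antisymmetric (@subset_le t).
Proof.
move=> A B; rewrite /subset_le /subset_lt.
case: (eqVneq A B) => //= _.
case/andP; case/orP=> [l1|/andP[/eqP e1 x1]]; case/orP=> [l2|/andP[/eqP e2 x2]].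
- lia.
- lia.
- lia.
- by rewrite lexlt_asym in x2.
Qed.

Lemma subset_le_total : total (@subset_le t).
Proof.
move=> A B; rewrite /subset_le /subset_lt.
case: (eqVneq A B) => //= nAB.
case: (ltngtP #|A| #|B|) => //= e.
apply: lexlt_total.
by apply: contra nAB => /eqP /elems_inj ->.
Qed.

Lemma subset_le_refl : reflexive (@subset_le t).
Proof. by move=> A; rewrite /subset_le eqxx. Qed.

Lemma compl_le A B : subset_le A B -> subset_le (~: B) (~: A).
Proof.
rewrite /subset_le; case/orP => [/eqP->|h]; first by rewrite eqxx.
by rewrite compl_lt ?orbT.
Qed.

Lemma set0_le A : subset_le set0 A.
Proof.
rewrite /subset_le /subset_lt; case: (eqVneq set0 A) => //= h.
by rewrite cards0 card_gt0 eq_sym h.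
Qed.

Lemma ordered_sorted : sorted (@subset_le t) (ordered_subsets t).
Proof. exact: sort_sorted subset_le_total _. Qed.

Lemma ordered_perm : perm_eq (ordered_subsets t) (enum {set 'I_t}).
Proof. by rewrite /ordered_subsets perm_sort. Qed.

Lemma size_ordered : size (ordered_subsets t) = 2 ^ t.
Proof.
rewrite /ordered_subsets size_sort -cardE.
have -> : #|{set 'I_t}| = #|powerset [set: 'I_t]|.
  by apply: eq_card => X; rewrite !inE subsetT.
by rewrite card_powerset cardsT card_ord.
Qed.

Lemma ordered_compl : ordered_subsets t = rev (map (fun X => ~: X) (ordered_subsets t)).
Proof.
apply: (sorted_eq subset_le_trans subset_le_anti).
- exact: ordered_sorted.
- rewrite rev_sorted sorted_map.
  apply: sub_sorted ordered_sorted => X Y /=; exact: compl_le.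
- have us : uniq (ordered_subsets t) by rewrite (perm_uniq ordered_perm) enum_uniq.
  have ms X : X \in ordered_subsets t by rewrite (perm_mem ordered_perm) mem_enum.
  rewrite perm_sym perm_rev; apply: uniq_perm => //.
    by rewrite (map_inj_uniq (@setC_inj _)).
  by move=> X; rewrite ms -{1}(setCK X) map_f.
Qed.

Lemma kth_compl k : k < 2 ^ t -> kth_subset t (2 ^ t - k.+1) = ~: kth_subset t k.
Proof.
move=> kt; rewrite /kth_subset {1}ordered_compl nth_rev size_map size_ordered; last by lia.
rewrite (_ : 2 ^ t - (2 ^ t - k.+1).+1 = k); last by lia.
by rewrite (nth_map set0) // size_ordered.
Qed.

Lemma kth0 : kth_subset t 0 = set0.
Proof.
have ms X : X \in ordered_subsets t by rewrite (perm_mem ordered_perm) mem_enum.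
have := ms set0; rewrite -index_mem => hi.
have p0 : 0 < size (ordered_subsets t) by rewrite size_ordered expn_gt0.
have := sorted_leq_nth subset_le_trans subset_le_refl set0 ordered_sorted 0 (index set0 (ordered_subsets t)) p0 hi (leq0n _).
rewrite nth_index ?ms // => h.
by apply: subset_le_anti; rewrite h set0_le.
Qed.

Lemma kth_last : kth_subset t (2 ^ t).-1 = setT.
Proof.
have t0 : 0 < 2 ^ t by rewrite expn_gt0.
by rewrite -subn1 -[1]/(0.+1) kth_compl // kth0 setC0.
Qed.
End Sub.
Local Open Scope ring_scope.

Lemma upB t (A : {set {set 'I_t}}) D :
  (D \in upclosure (blocker A)) = ~~ ((~: D) \in upclosure A).
Proof.
have eP : (D \in upclosure (blocker A)) = [forall X in A, X :&: D != set0].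
  rewrite inE; apply/existsP/forallP => [[Bm /andP[]]|h].
    rewrite inE => /minsetP[/forallP PB _] BD X; apply/implyP => XA.
    have := implyP (PB X) XA; apply: contra => /eqP XD.
    by rewrite -subset0 -XD setIS.
  have [Bm mB BD] := minset_exists (P := fun E : {set 'I_t} => [forall X in A, X :&: E != set0]) (C := D) (introT forallP h).
  by exists Bm; rewrite inE mB BD.
rewrite eP inE negb_exists; apply: eq_forallb => X.
by rewrite setI_eq0 disjoints_subset; case: (X \in A); case: (X \subset _).
Qed.

Lemma topeE t (F : {set {set 'I_t}}) (k : 'I_(2 ^ t)) :
  topeF F 0 k = 1 - 2%:R * ((kth_subset t k \in F)%:R).
Proof. by rewrite /topeF /gammaF !mxE. Qed.

Definition opred n (m : 'I_n) : 'I_n := Ordinal (leq_ltn_trans (leq_pred m) (ltn_ord m)).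

Lemma mulUbar n (v : 'rV[rat]_n) k : (v *m Ubar n) 0 k = v 0 (rev_ord k).
Proof.
rewrite mxE (bigD1 (rev_ord k)) //= big1 ?addr0.
  by rewrite /Ubar mxE /= (_ : (n - k.+1 + k == n.-1)%N) ?mulr1 //; apply/eqP; have := ltn_ord k; lia.
move=> i ni; rewrite /Ubar mxE; case: eqP => [h|]; rewrite ?mulr0 //.
by case/eqP: ni; apply/val_inj => /=; have := ltn_ord k; lia.
Qed.

Lemma mulTbar n (v : 'rV[rat]_n) k :
  (v *m Tbar n) 0 k = if val k == 0 then 0 else v 0 (opred k).
Proof.
rewrite mxE; case: eqP => [k0|k0].
  by rewrite big1 // => i _; rewrite /Tbar mxE k0 mulr0.
change (nat_of_ord k <> 0%N) in k0.
rewrite (bigD1 (opred k)) //= big1 ?addr0.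
  by rewrite /Tbar mxE /= (_ : (nat_of_ord k == k.-1.+1)%N) ?mulr1 //; apply/eqP; lia.
move=> i ni; rewrite /Tbar mxE; case: eqP => [h|]; rewrite ?mulr0 //.
by case/eqP: ni; apply/val_inj => /=; move: h; rewrite /= => /eqP; lia.
Qed.

Lemma TB_rel t (A : {set {set 'I_t}}) :
  topeF (upclosure (blocker A)) = - (topeF (upclosure A) *m Ubar (2 ^ t)).
Proof.
apply/rowP => k; rewrite [RHS]mxE mulUbar !topeE upB /= kth_compl // .
by case: (_ \in _) => /=; rewrite ?mulr1 ?mulr0; lra.
Qed.

Definition xform n (T : 'rV[rat]_n) : 'rV[rat]_n :=
  \row_(m < n) (if val m == 0%N then (T 0 m + T 0 (rev_ord m)) / 2%:R
                else (T 0 m - T 0 (opred m)) / 2%:R).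

Lemma Rmat_entry n (i m : 'I_n) : Rmat n i m = if (m < i)%N then -1 else 1.
Proof. by rewrite /Rmat /Rvec !mxE. Qed.

Lemma xform_mul n (T : 'rV[rat]_n) : xform T *m Rmat n = T.
Proof.
case: n T => [|n] T; first by apply/rowP => -[].
apply/rowP => m; rewrite mxE.
pose g := fun k : nat => T 0 (inord k).
have gE (i : 'I_n.+1) : T 0 i = g i by rewrite /g inord_val.
rewrite big_ord_recl Rmat_entry /= mxE /= gE (gE (rev_ord _)) /= subn1 /=.
under eq_bigr => i _.
  rewrite Rmat_entry mxE /= gE (gE (opred _)) /=.
  over.
rewrite /= -(big_mkord xpredT (fun i => (g (bump 0 i) - g (bump 0 i).-1) / 2%:R * (if (m < bump 0 i)%N then -1 else 1))).
have mn : (m <= n)%N by rewrite -ltnS.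
rewrite (big_cat_nat (leq0n m) mn) /=.
have e1 : \sum_(0 <= i < m) ((g (bump 0 i) - g (bump 0 i).-1) / 2%:R * (if (m < bump 0 i)%N then -1 else 1)) = (g m - g 0) / 2%:R.
  rewrite (eq_big_nat _ _ (F2 := fun i => (g i.+1 - g i) / 2%:R)).
    by rewrite -big_distrl telescope_sumr.
  by move=> i /andP[_ im]; rewrite /bump /= add1n ltnNge im mulr1.
have e2 : \sum_(m <= i < n) ((g (bump 0 i) - g (bump 0 i).-1) / 2%:R * (if (m < bump 0 i)%N then -1 else 1)) = - ((g n - g m) / 2%:R).
  rewrite (eq_big_nat _ _ (F2 := fun i => - ((g i.+1 - g i) / 2%:R))).
    by rewrite sumrN -big_distrl telescope_sumr.
  by move=> i /andP[mi _]; rewrite /bump /= add1n ltnS mi mulrN1.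
rewrite e1 e2 gE; lra.
Qed.

Lemma Rmat_unit n : Rmat n \in unitmx.
Proof.
case: n => [|n]; first by rewrite unitmxE det_mx00 unitr1.
pose B := \matrix_(r < n.+1) xform (delta_mx (0 : 'I_1) r).
have : B *m Rmat n.+1 = 1%:M.
  by apply/row_matrixP => r; rewrite row_mul rowK xform_mul row1.
by case/mulmx1_unit.
Qed.

Lemma xvecE n (T : 'rV[rat]_n) : xvec T = xform T.
Proof. by rewrite /xvec -{1}(xform_mul T) mulmxK // Rmat_unit. Qed.

Lemma negUE n (T : 'rV[rat]_n) k : (- (T *m Ubar n)) 0 k = - T 0 (rev_ord k).
Proof. by rewrite mxE mulUbar. Qed.

Lemma xform_negU n (T : 'rV[rat]_n) :
  (forall k : 'I_n, val k = 0%N -> T 0 k + T 0 (rev_ord k) = 0) ->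
  xform (- (T *m Ubar n)) = xform T *m Ubar n *m Tbar n.
Proof.
move=> h0; apply/rowP => m; rewrite mulTbar mulUbar [LHS]mxE !negUE.
case: eqP => [m0|m0].
  by rewrite rev_ordK -opprD addrC h0 // oppr0 mul0r.
change (nat_of_ord m <> 0%N) in m0.
rewrite mxE /=.
have -> : (n - (m.-1).+1 == 0)%N = false by apply/negbTE; have := ltn_ord m; lia.
have -> : opred (rev_ord (opred m)) = rev_ord m by apply/val_inj => /=; have := ltn_ord m; lia.
lra.
Qed.

Definition phi n (m : 'I_n) : 'I_n := if val m == 0%N then m else rev_ord (opred m).

Lemma phiK n : involutive (@phi n).
Proof.
move=> m; rewrite /phi; case: (@eqP _ (val m) 0%N) => [h|m0] /=.
  by rewrite h eqxx.
change (nat_of_ord m <> 0%N) in m0.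
rewrite /= ifF; last by apply/negbTE; have := ltn_ord m; lia.
by apply/val_inj => /=; have := ltn_ord m; lia.
Qed.

Lemma qnum_rel n (TA TB : 'rV[rat]_n) :
  (forall k : 'I_n, val k = 0%N -> xvec TA 0 k = 0) ->
  xvec TB = xvec TA *m Ubar n *m Tbar n -> qnum TB = qnum TA.
Proof.
move=> x0 e; rewrite /qnum e.
have yE m : (xvec TA *m Ubar n *m Tbar n) 0 m = xvec TA 0 (phi m).
  rewrite mulTbar mulUbar /phi; case: (@eqP _ (val m) 0%N) => [h|//].
  by rewrite x0.
rewrite -(card_preimset _ (inv_inj (@phiK n))); apply: eq_card => m.
by rewrite !inE yE phiK.
Qed.

Lemma sum_count (T : Type) (s : seq T) (P : pred T) :
  (\sum_(l <- s) (P l : nat))%N = count P s.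
Proof. by elim: s => [|x s IH]; rewrite ?big_nil ?big_cons ?IH. Qed.

Lemma sum_ind (a b p : nat) (f : nat -> nat) :
  {in index_iota a b &, injective f} ->
  (\sum_(a <= l < b) ((p == f l) : nat))%N = (p \in map f (index_iota a b)).
Proof.
move=> inj; rewrite -count_uniq_mem ?map_inj_in_uniq ?iota_uniq // count_map.
rewrite (sum_count _ (fun l => p == f l)); apply: eq_count => l /=.
by rewrite /preim /= eq_sym.
Qed.

Lemma sum_ord_ind n e : (1 <= e <= n)%N -> (\sum_(m < n) ((m.+1 == e) : nat))%N = 1%N.
Proof.
move=> he; have en : (e.-1 < n)%N by lia.
rewrite (bigD1 (Ordinal en)) //= big1 ?addn0; first by rewrite prednK ?eqxx //; lia.
move=> m nm; apply/eqP; rewrite eqb0; apply: contra nm => /eqP h.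
by apply/eqP/val_inj => /=; lia.
Qed.

Lemma one_neq_m1 : (1 : rat) <> -1.
Proof. by move/eqP. Qed.

Section Part2.
Variables (n rho : nat) (i j : nat -> nat) (T : 'rV[rat]_n).
Hypothesis n0 : (0 < n)%N.
Hypothesis Tpm : forall k, T 0 k = 1 \/ T 0 k = -1.
Hypothesis T0 : forall k : 'I_n, val k = 0%N -> T 0 k = 1.
Hypothesis Tl : forall k : 'I_n, val k = n.-1 -> T 0 k = -1.
Hypothesis H1 : forall k, (1 <= k <= rho)%N -> (1 <= i k)%N /\ (i k <= j k)%N /\ (j k <= n)%N.
Hypothesis H2 : forall k, (1 <= k <= rho.-1)%N -> (j k + 2 <= i k.+1)%N.
Hypothesis H3 : forall k : 'I_n,
  T 0 k = -1 <-> exists l, (1 <= l <= rho)%N /\ (i l <= k.+1 <= j l)%N.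

Definition inU p := exists l, (1 <= l <= rho)%N /\ (i l <= p <= j l)%N.

Lemma chain l l' : (1 <= l)%N -> (l < l')%N -> (l' <= rho)%N -> (j l + 2 <= i l')%N.
Proof.
move=> l1 ll' l'r.
have [d ed] : exists d, l' = (l + d.+1)%N by exists (l' - l).-1; lia.
subst l'; clear ll'.
move: l'r; elim: d => [|d IH] h.
  by have := @H2 l; rewrite addn1; apply; lia.
have h' : (l + d.+1 <= rho)%N by lia.
have := IH h'; have := @H1 (l + d.+1); have := @H2 (l + d.+1).
rewrite !addnS; lia.
Qed.

Lemma TU (k : 'I_n) : inU k.+1 -> T 0 k = -1.
Proof. by move=> h; apply/H3. Qed.

Lemma TnU (k : 'I_n) : ~ inU k.+1 -> T 0 k = 1.
Proof. by move=> h; case: (Tpm k) => // /H3. Qed.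

Lemma jrho : (1 <= rho)%N /\ j rho = n.
Proof.
have ln : (n.-1 < n)%N by lia.
have [l [hl hp]] := (H3 (Ordinal ln)).1 (@Tl (Ordinal ln) erefl).
move: hp; rewrite /= prednK // => hp.
have := @H1 l hl.
case: (ltnP l rho) => lr.
  by have := @chain l rho; have := @H1 rho; lia.
move=> ?; split; [lia|]. have -> : rho = l by lia. lia.
Qed.

Lemma ige2 l : (1 <= l <= rho)%N -> (2 <= i l)%N.
Proof.
move=> hl; case: (ltnP 1 (i l)) => // il.
have hU : inU (Ordinal n0).+1 by exists l; have := @H1 l hl; rewrite /=; lia.
have := @T0 (Ordinal n0) erefl; rewrite (TU hU).
by move=> h; lra.
Qed.

Lemma clA p : (2 <= p)%N -> (exists l, (1 <= l <= rho)%N /\ i l = p) -> inU p /\ ~ inU p.-1.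
Proof.
move=> p2 [l [hl e]]; split; first by exists l; have := @H1 l hl; lia.
move=> [l' [hl' hp]]; case: (ltngtP l' l) => c.
- by have := @chain l' l; lia.
- by have := @chain l l'; have := @H1 l hl; lia.
- subst l'; lia.
Qed.

Lemma clB p : (exists k, (1 <= k < rho)%N /\ (j k + 1)%N = p) -> ~ inU p /\ inU p.-1.
Proof.
move=> [k [hk e]]; split; last by exists k; have := @H1 k; lia.
move=> [l' [hl' hp]]; case: (ltngtP l' k) => c.
- by have := @chain l' k; have := @H1 k; lia.
- by have := @chain k l'; lia.
- subst l'; lia.
Qed.

Lemma clC p : inU p -> ~ inU p.-1 -> exists l, (1 <= l <= rho)%N /\ i l = p.
Proof.
move=> [l [hl hp]] nU; exists l; split => //.
case: (eqVneq (i l) p) => // ne; case: nU; exists l; lia.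
Qed.

Lemma clD p : (p <= n)%N -> ~ inU p -> inU p.-1 -> exists k, (1 <= k < rho)%N /\ (j k + 1)%N = p.
Proof.
move=> pn nU [l [hl hp]]; have [r1 jr] := jrho; have := @H1 l hl => hh.
have e : j l = p.-1.
  case: (eqVneq (j l) p.-1) => // ne; case: nU; exists l; lia.
exists l; split; last by lia.
case: (eqVneq l rho) => [lr|]; last by lia.
subst l; lia.
Qed.

Definition An p := p \in map i (index_iota 1 rho.+1).
Definition Bn p := p \in map (fun k => j k + 1)%N (index_iota 1 rho).

Lemma AnP p : reflect (exists l, (1 <= l <= rho)%N /\ i l = p) (An p).
Proof.
apply: (iffP mapP) => [[l]|[l [hl e]]].
  by rewrite mem_index_iota => hl ->; exists l; split => //; lia.
by exists l; rewrite ?mem_index_iota //; lia.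
Qed.

Lemma BnP p : reflect (exists k, (1 <= k < rho)%N /\ (j k + 1)%N = p) (Bn p).
Proof.
apply: (iffP mapP) => [[l]|[l [hl e]]].
  by rewrite mem_index_iota => hl ->; exists l.
by exists l; rewrite ?mem_index_iota.
Qed.

Lemma AB_excl p : (2 <= p)%N -> An p -> Bn p -> False.
Proof.
by move=> p2 /AnP/(clA p2)[h _] /BnP/clB[h' _].
Qed.

Lemma xformE (m : 'I_n) : xform T 0 m = (Bn m.+1)%:R - (An m.+1)%:R.
Proof.
rewrite mxE; case: (@eqP _ (val m) 0%N) => [m0|m0].
  have -> : An m.+1 = false.
    by apply/negbTE/negP => /AnP[l [hl e]]; have := ige2 hl; move: e; rewrite /= m0; lia.
  have -> : Bn m.+1 = false.
    by apply/negbTE/negP => /BnP[k [hk e]]; have := @H1 k; move: e; rewrite /= m0; lia.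
  change (nat_of_ord m = 0%N) in m0.
  rewrite T0 // Tl /=; last by have := ltn_ord m; lia.
  by rewrite subrr addrN mul0r.
change (nat_of_ord m <> 0%N) in m0.
have p2 : (2 <= m.+1)%N by lia.
have pn : (m.+1 <= n)%N by apply: ltn_ord.
have eo : (opred m).+1 = m by rewrite /= prednK //; lia.
case: (boolP (An m.+1)) => [/AnP hA|nA].
  have [hU hnU] := clA p2 hA.
  have -> : Bn m.+1 = false by apply/negbTE/negP => /(AB_excl p2 (introT (AnP _) hA)).
  rewrite TU // TnU ?eo //=; lra.
case: (boolP (Bn m.+1)) => [/BnP hB|nB].
  have [hU hnU] := clB hB.
  rewrite TnU // TU ?eo //=; lra.
rewrite subrr.
have e1 : inU m.+1 -> ~ inU m -> False.
  by move=> h1 h2; case/negP: nA; apply/AnP; apply: clC => //; rewrite -pred_Sn.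
have e2 : ~ inU m.+1 -> inU m -> False.
  by move=> h1 h2; case/negP: nB; apply/BnP; apply: clD => //; rewrite -pred_Sn.
have h1 : T 0 m = -1 -> inU m.+1 by move/H3.
have h2 : T 0 (opred m) = -1 -> inU m by move/H3; rewrite eo.
have h3 : inU m.+1 -> T 0 m = -1 by move=> h; apply: TU.
have h4 : inU m -> T 0 (opred m) = -1 by move=> h; apply: TU; rewrite eo.
case: (Tpm m) => q1; case: (Tpm (opred m)) => q2.
- by rewrite q1 q2; lra.
- exfalso; apply: (e2 _ (h2 q2)) => /h3 h; rewrite q1 in h; exact: one_neq_m1 h.
- exfalso; apply: (e1 (h1 q1) _) => /h4 h; rewrite q2 in h; exact: one_neq_m1 h.
- by rewrite q1 q2; lra.
Qed.

Lemma inj_i : {in index_iota 1 rho.+1 &, injective i}.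
Proof.
move=> l l'; rewrite !mem_index_iota => hl hl' e.
case: (ltngtP l l') => // c.
- by have := @chain l l'; have := @H1 l; lia.
- by have := @chain l' l; have := @H1 l'; lia.
Qed.

Lemma inj_j : {in index_iota 1 rho &, injective (fun k => j k + 1)%N}.
Proof.
move=> l l'; rewrite !mem_index_iota => hl hl' e.
case: (ltngtP l l') => // c.
- by have := @chain l l'; have := @H1 l'; lia.
- by have := @chain l' l; have := @H1 l; lia.
Qed.

Definition yv : 'rV[rat]_n := \sum_(1 <= k < rho) sigma n (j k + 1) - \sum_(1 <= l < rho.+1) sigma n (i l).

Lemma yvE (m : 'I_n) : yv 0 m = (Bn m.+1)%:R - (An m.+1)%:R.
Proof.
rewrite /yv !mxE !summxE.
under eq_bigr => k _ do rewrite mxE.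
under [X in _ - X]eq_bigr => k _ do rewrite mxE.
rewrite -!natr_sum sum_ind ?sum_ind //; [exact: inj_i | exact: inj_j].
Qed.

Lemma xform_yv : xform T = yv.
Proof. by apply/rowP => m; rewrite xformE // yvE. Qed.

Lemma card_yv : #|[set m : 'I_n | yv 0 m != 0]| = (2 * rho - 1)%N.
Proof.
have [r1 jr] := jrho.
have ex m : An m.+1 -> Bn m.+1 -> False.
  move=> a b; apply: (@AB_excl m.+1) => //.
  by move: a => /(AnP) [l [hl e]]; have := ige2 hl; lia.
rewrite -sum1_card big_mkcond /=.
under eq_bigr => m _.
  rewrite inE yvE.
  have -> : (if (((Bn m.+1)%:R - (An m.+1)%:R)%R != 0%R :> rat) then 1%N else 0%N)
          = (An m.+1 + Bn m.+1)%N.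
    by case: (An _) (Bn _) (ex m) => [] [] // /(_ erefl erefl).
  over.
rewrite big_split /=.
rewrite /An /Bn.
under eq_bigr => m _ do rewrite -(sum_ind _ inj_i).
under [X in (_ + X)%N]eq_bigr => m _ do rewrite -(sum_ind _ inj_j).
rewrite exchange_big [X in (_ + X)%N]exchange_big /=.
rewrite (eq_big_nat _ _ (F2 := fun _ => 1%N)); last first.
  move=> l hl; rewrite (eq_bigr (fun m : 'I_n => ((m.+1 == i l) : nat))) ?sum_ord_ind //.
  by have := @H1 l; lia.
rewrite [X in (_ + X)%N](eq_big_nat _ _ (F2 := fun _ => 1%N)); last first.
  move=> l hl; rewrite (eq_bigr (fun m : 'I_n => ((m.+1 == j l + 1) : nat))) ?sum_ord_ind //.
  by have := @chain l rho; have := @H1 l; have := @H1 rho; lia.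
rewrite !sum_nat_const_nat; lia.
Qed.

Lemma sigmaUT e : (2 <= e <= n)%N -> sigma n e *m Ubar n *m Tbar n = sigma n (n + 2 - e).
Proof.
move=> he; apply/rowP => m; rewrite mulTbar mulUbar !mxE.
case: (@eqP _ (val m) 0%N) => [m0|m0] /=.
  change (nat_of_ord m = 0%N) in m0.
  by rewrite (_ : (m.+1 == n + 2 - e)%N = false) //; apply/negbTE/eqP; lia.
change (nat_of_ord m <> 0%N) in m0.
have := ltn_ord m => mn.
by congr (_%:R); apply/eqP/eqP; lia.
Qed.

Lemma yvUT : yv *m Ubar n *m Tbar n =
  \sum_(1 <= k < rho) sigma n (n - j k + 1) - \sum_(1 <= l < rho.+1) sigma n (n - i l + 2).
Proof.
have [r1 jr] := jrho.
rewrite /yv !mulmxBl !mulmx_suml.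
congr (_ - _); apply: eq_big_nat => k hk.
  have := @chain k rho; have := @H1 k; have := @H1 rho => h1 h2 h3.
  rewrite sigmaUT; last by lia.
  by congr sigma; lia.
have := @H1 k; have := @ige2 k => h1 h2.
rewrite sigmaUT; last by lia.
by congr sigma; lia.
Qed.
End Part2.

Theorem theorem6p3 (t : nat) (A : {set {set 'I_t}}) :
  (3 <= t)%N -> nontrivial_clutter A ->
  let B := blocker A in
  let TA := topeF (upclosure A) in
  let TB := topeF (upclosure B) in
  TB = - (TA *m Ubar (2 ^ t))
  /\ (qnum TB = qnum TA /\ xvec TB = xvec TA *m Ubar (2 ^ t) *m Tbar (2 ^ t))
  /\ (forall (rho : nat) (i j : nat -> nat),
        (forall k, (1 <= k <= rho)%N -> (1 <= i k)%N /\ (i k <= j k)%N /\ (j k <= 2 ^ t)%N) ->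
        (forall k, (1 <= k <= rho.-1)%N -> (j k + 2 <= i k.+1)%N) ->
        (forall k : 'I_(2 ^ t),
            TA 0 k = -1 <-> exists l, (1 <= l <= rho)%N /\ (i l <= k.+1 <= j l)%N) ->
        qnum TB = qnum TA /\ qnum TA = (2 * rho - 1)%N
        /\ xvec TA = \sum_(1 <= k < rho) sigma (2 ^ t) (j k + 1)
                     - \sum_(1 <= l < rho.+1) sigma (2 ^ t) (i l)
        /\ xvec TB = \sum_(1 <= k < rho) sigma (2 ^ t) (2 ^ t - j k + 1)
                     - \sum_(1 <= l < rho.+1) sigma (2 ^ t) (2 ^ t - i l + 2)).
Proof.
move=> t3 [Hcl [Hne Hn0]] B TA TB.
have n0 : (0 < 2 ^ t)%N by rewrite expn_gt0.
have hTB : TB = - (TA *m Ubar (2 ^ t)) by exact: TB_rel.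
have s0 : set0 \notin upclosure A.
  rewrite inE; apply/negP => /existsP[X /andP[XA]]; rewrite subset0 => /eqP X0.
  case/negP: Hn0; apply/eqP/setP => Y; rewrite inE.
  apply/idP/eqP => [YA|->]; last by rewrite -X0.
  by have := Hcl _ _ XA YA; rewrite X0 sub0set => /(_ isT) <-.
have sT : setT \in upclosure A.
  rewrite inE; have [X XA] := set0Pn _ Hne; apply/existsP; exists X; rewrite XA subsetT.
  done.
have Tpm : forall k, TA 0 k = 1 \/ TA 0 k = -1.
  by move=> k; rewrite /TA topeE; case: (_ \in _); [right|left]; rewrite /=; lra.
have T0 : forall k : 'I_(2 ^ t), val k = 0%N -> TA 0 k = 1.
  move=> k k0; rewrite /TA topeE (_ : nat_of_ord k = 0%N) // kth0 (negbTE s0) /=; lra.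
have Tl : forall k : 'I_(2 ^ t), val k = (2 ^ t).-1 -> TA 0 k = -1.
  move=> k kl; rewrite /TA topeE (_ : nat_of_ord k = (2 ^ t).-1) // kth_last sT /=; lra.
have h0 : forall k : 'I_(2 ^ t), val k = 0%N -> TA 0 k + TA 0 (rev_ord k) = 0.
  move=> k k0; rewrite T0 // Tl /=; first by lra.
  change (nat_of_ord k = 0%N) in k0; lia.
have x0 : forall k : 'I_(2 ^ t), val k = 0%N -> xvec TA 0 k = 0.
  move=> k k0; rewrite xvecE mxE k0 eqxx h0 //; lra.
have hx : xvec TB = xvec TA *m Ubar (2 ^ t) *m Tbar (2 ^ t).
  by rewrite !xvecE hTB xform_negU.
have hq : qnum TB = qnum TA by apply: qnum_rel x0 hx.
split => //; split => //.
move=> rho i j H1 H2 H3.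
have xA := xform_yv n0 Tpm T0 Tl H1 H2 H3.
split => //; split.
  by rewrite /qnum xvecE xA (card_yv n0 T0 Tl H1 H2 H3).
split; first by rewrite xvecE xA.
by rewrite hx xvecE xA (yvUT n0 T0 Tl H1 H2 H3).
Qed.
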